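(* If $\vec t\succ\vec t'_1$ and $\vec t\succ\vec t'_2$, then one of the following holds: $\vec t'_1=\vec t'_2$; or $\vec t'_1\succ\vec t'_2$; or $\vec t'_2\succ\vec t'_1$; or there is $\vec t''$ with $\vec t'_1\succ\vec t''$ and $\vec t'_2\succ\vec t''$.
   Context: Calculus. Pure values: $v,w::=x\mid\lambda x.\vec{s}\mid *\mid (v_1,v_2)\mid \mathtt{inl}(v)\mid\mathtt{inr}(v)$. Pure terms: $s,t::=v\mid s\,t\mid t;\vec{s}\mid \mathtt{let}\,(x_1,x_2)=t\,\mathtt{in}\,\vec{s}\mid \mathtt{match}\,t\,\{\mathtt{inl}\,x_1\mapsto\vec{s}_1\mid\mathtt{inr}\,x_2\mapsto\vec{s}_2\}$. Term distributions $\vec{t}::=\vec{0}\mid t\mid \vec{s}+\vec{t}\mid\alpha\cdot\vec{t}$ ($\alpha\in\mathbb{C}$), with equality $=$ at top level meaning the congruence generated by the weak vector space laws ($+$ commutative, associative with unit $\vec0$; $1\cdot\vec t=\vec t$; $\alpha\cdot(\beta\cdot\vec t)=\alpha\beta\cdot\vec t$; $(\alpha+\beta)\cdot\vec t=\alpha\cdot\vec t+\beta\cdot\vec t$; $\alpha\cdot(\vec t_1+\vec t_2)=\alpha\cdot\vec t_1+\alpha\cdot\vec t_2$), not acting inside pure terms and not identifying $0\cdot t$ with $\vec0$. Constructs are extended by linearity (application bilinear, pairs bilinear, $\mathtt{inl},\mathtt{inr}$ linear, $;$, let, match linear in the first argument). Atomic evaluation $t\triangleright\vec t'$: $(\lambda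 x.\vec t)\,v\triangleright\vec t[x:=v]$; $*;\vec s\triangleright\vec s$; $\mathtt{let}\,(x,y)=(v,w)\,\mathtt{in}\,\vec s\triangleright\vec s[x:=v,y:=w]$; $\mathtt{match}\,\mathtt{inl}(v)\{\ldots\}\triangleright\vec s_1[x_1:=v]$; $\mathtt{match}\,\mathtt{inr}(v)\{\ldots\}\triangleright\vec s_2[x_2:=v]$; if $t\triangleright\vec t'$ then $s\,t\triangleright s\,\vec t'$, $t\,v\triangleright\vec t'\,v$, $t;\vec s\triangleright\vec t';\vec s$, and likewise in the scrutinee of let and match ($v,w$ pure values). One-step evaluation: $\vec t\succ\vec t'$ iff $\vec t=\alpha\cdot s+\vec r$ and $\vec t'=\alpha\cdot\vec s'+\vec r$ for some $\alpha\in\mathbb C$, pure term $s$, distributions $\vec s',\vec r$ with $s\triangleright\vec s'$. *)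

(* Defs.v *)
From Stdlib Require Import Reals.
From Coquelicot Require Import Coquelicot.

(* De Bruijn syntax (terms up to alpha-equivalence).
   Lam binds 1 variable in its body; Let binds 2 (index 1 = x1, index 0 = x2);
   each Match branch binds 1 variable. *)
Inductive value : Type :=
  | Var  : nat -> value
  | Lam  : tdist -> value
  | Unit : value
  | Pair : value -> value -> value
  | Inl  : value -> value
  | Inr  : value -> value
with term : Type :=
  | Val   : value -> term
  | App   : term -> term -> term
  | Seq   : term -> tdist -> term
  | Let   : term -> tdist -> term
  | Match : term -> tdist -> tdist -> term
with tdist : Type :=
  | DZero : tdist
  | DPure : term -> tdist
  | DAdd  : tdist -> tdist -> tdist
  | DScal : C -> tdist -> tdist.

Definition upren (xi : nat -> nat) (n : nat) : nat :=
  match n with 0 => 0 | S k => S (xi k) end.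

Fixpoint ren_v (xi : nat -> nat) (v : value) : value :=
  match v with
  | Var n => Var (xi n)
  | Lam d => Lam (ren_d (upren xi) d)
  | Unit => Unit
  | Pair a b => Pair (ren_v xi a) (ren_v xi b)
  | Inl a => Inl (ren_v xi a)
  | Inr a => Inr (ren_v xi a)
  end
with ren_t (xi : nat -> nat) (t : term) : term :=
  match t with
  | Val v => Val (ren_v xi v)
  | App s u => App (ren_t xi s) (ren_t xi u)
  | Seq u d => Seq (ren_t xi u) (ren_d xi d)
  | Let u d => Let (ren_t xi u) (ren_d (upren (upren xi)) d)
  | Match u d1 d2 => Match (ren_t xi u) (ren_d (upren xi) d1) (ren_d (upren xi) d2)
  end
with ren_d (xi : nat -> nat) (d : tdist) : tdist :=
  match d with
  | DZero => DZero
  | DPure t => DPure (ren_t xi t)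
  | DAdd a b => DAdd (ren_d xi a) (ren_d xi b)
  | DScal al a => DScal al (ren_d xi a)
  end.

Definition up (sigma : nat -> value) (n : nat) : value :=
  match n with 0 => Var 0 | S k => ren_v S (sigma k) end.

Fixpoint sub_v (sigma : nat -> value) (v : value) : value :=
  match v with
  | Var n => sigma n
  | Lam d => Lam (sub_d (up sigma) d)
  | Unit => Unit
  | Pair a b => Pair (sub_v sigma a) (sub_v sigma b)
  | Inl a => Inl (sub_v sigma a)
  | Inr a => Inr (sub_v sigma a)
  end
with sub_t (sigma : nat -> value) (t : term) : term :=
  match t with
  | Val v => Val (sub_v sigma v)
  | App s u => App (sub_t sigma s) (sub_t sigma u)
  | Seq u d => Seq (sub_t sigma u) (sub_d sigma d)
  | Let u d => Let (sub_t sigma u) (sub_d (up (up sigma)) d)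
  | Match u d1 d2 => Match (sub_t sigma u) (sub_d (up sigma) d1) (sub_d (up sigma) d2)
  end
with sub_d (sigma : nat -> value) (d : tdist) : tdist :=
  match d with
  | DZero => DZero
  | DPure t => DPure (sub_t sigma t)
  | DAdd a b => DAdd (sub_d sigma a) (sub_d sigma b)
  | DScal al a => DScal al (sub_d sigma a)
  end.

Definition subst1 (v : value) (d : tdist) : tdist :=
  sub_d (fun n => match n with 0 => v | S k => Var k end) d.

Definition subst2 (v w : value) (d : tdist) : tdist :=
  sub_d (fun n => match n with 0 => w | 1 => v | S (S k) => Var k end) d.

Fixpoint dlin (f : term -> term) (d : tdist) : tdist :=
  match d with
  | DZero => DZero
  | DPure t => DPure (f t)
  | DAdd a b => DAdd (dlin f a) (dlin f b)
  | DScal al a => DScal al (dlin f a)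
  end.

(* Weak vector space equality on distributions (top level only) *)
Inductive deq : tdist -> tdist -> Prop :=
  | deq_refl  : forall d, deq d d
  | deq_sym   : forall d e, deq d e -> deq e d
  | deq_trans : forall d e f, deq d e -> deq e f -> deq d f
  | deq_add   : forall d d' e e', deq d d' -> deq e e' -> deq (DAdd d e) (DAdd d' e')
  | deq_scal  : forall al d d', deq d d' -> deq (DScal al d) (DScal al d')
  | deq_addC  : forall d e, deq (DAdd d e) (DAdd e d)
  | deq_addA  : forall d e f, deq (DAdd d (DAdd e f)) (DAdd (DAdd d e) f)
  | deq_add0  : forall d, deq (DAdd d DZero) d
  | deq_scal1 : forall d, deq (DScal (RtoC 1) d) d
  | deq_scalA : forall al be d, deq (DScal al (DScal be d)) (DScal (Cmult al be) d)
  | deq_scalDl : forall al be d,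
      deq (DScal (Cplus al be) d) (DAdd (DScal al d) (DScal be d))
  | deq_scalDr : forall al d e,
      deq (DScal al (DAdd d e)) (DAdd (DScal al d) (DScal al e)).

Inductive atomic : term -> tdist -> Prop :=
  | at_beta  : forall d v, atomic (App (Val (Lam d)) (Val v)) (subst1 v d)
  | at_seq   : forall s, atomic (Seq (Val Unit) s) s
  | at_let   : forall v w s, atomic (Let (Val (Pair v w)) s) (subst2 v w s)
  | at_inl   : forall v s1 s2, atomic (Match (Val (Inl v)) s1 s2) (subst1 v s1)
  | at_inr   : forall v s1 s2, atomic (Match (Val (Inr v)) s1 s2) (subst1 v s2)
  | at_appR  : forall s t d, atomic t d -> atomic (App s t) (dlin (App s) d)
  | at_appL  : forall t v d, atomic t d ->
      atomic (App t (Val v)) (dlin (fun u => App u (Val v)) d)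
  | at_seqC  : forall t s d, atomic t d -> atomic (Seq t s) (dlin (fun u => Seq u s) d)
  | at_letC  : forall t s d, atomic t d -> atomic (Let t s) (dlin (fun u => Let u s) d)
  | at_matchC : forall t s1 s2 d, atomic t d ->
      atomic (Match t s1 s2) (dlin (fun u => Match u s1 s2) d).

Definition step (t t' : tdist) : Prop :=
  exists (al : C) (s : term) (s' r : tdist),
    deq t (DAdd (DScal al (DPure s)) r) /\
    deq t' (DAdd (DScal al s') r) /\
    atomic s s'.

(* Main.v *)
Require Import Defs.
From Stdlib Require Import Reals.
From Coquelicot Require Import Coquelicot.
From Stdlib Require Import List Permutation ClassicalEpsilon Classical.
Import ListNotations.

Lemma atomic_val v d : ~ atomic (Val v) d.
Proof. intro H; inversion H. Qed.

Lemma atomic_det s d1 d2 : atomic s d1 -> atomic s d2 -> d1 = d2.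
Proof.
  intros H; revert d2; induction H; intros d2 H2; inversion H2; subst;
    try reflexivity;
    try (exfalso; eapply atomic_val; eassumption);
    try (match goal with H : atomic (Val _) _ |- _ => inversion H end);
    try (f_equal; auto).
Qed.

Definition tdec (x y : term) : {x = y} + {x <> y} := excluded_middle_informative (x = y).

Fixpoint coef (d : tdist) (u : term) : C :=
  match d with
  | DZero => RtoC 0
  | DPure t => if tdec t u then RtoC 1 else RtoC 0
  | DAdd a b => Cplus (coef a u) (coef b u)
  | DScal al a => Cmult al (coef a u)
  end.

Fixpoint supp (d : tdist) (u : term) : Prop :=
  match d with
  | DZero => False
  | DPure t => t = u
  | DAdd a b => supp a u \/ supp b u
  | DScal _ a => supp a u
  end.

Definition sem (d e : tdist) : Prop :=
  (forall u, coef d u = coef e u) /\ (forall u, supp d u <-> supp e u).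

Lemma deq_sound d e : deq d e -> sem d e.
Proof.
  induction 1; unfold sem in *; simpl;
   repeat match goal with H : _ /\ _ |- _ => destruct H end;
   split; intros;
   try (first [ring | tauto]).
  - symmetry; auto.
  - firstorder.
  - congruence.
  - firstorder.
  - congruence.
  - firstorder.
  - congruence.
  - firstorder.
Qed.

Lemma nsupp_coef d u : ~ supp d u -> coef d u = RtoC 0.
Proof.
  induction d; simpl; intros H.
  - reflexivity.
  - destruct (tdec t u); [contradiction|reflexivity].
  - rewrite IHd1, IHd2 by tauto; ring.
  - rewrite IHd by tauto; ring.
Qed.

Lemma supp_fin d : exists K, forall u, supp d u -> In u K.
Proof.
  induction d; simpl.
  - exists []; tauto.
  - exists [t]; simpl; auto.
  - destruct IHd1 as [K1 H1], IHd2 as [K2 H2]; exists (K1 ++ K2); intros u [Hu|Hu];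
      apply in_or_app; auto.
  - exact IHd.
Qed.

Lemma exists_rep (K : list term) : forall (P : term -> Prop) (g : term -> C),
  (forall u, P u -> In u K) -> (forall u, ~ P u -> g u = RtoC 0) ->
  exists r, (forall u, coef r u = g u) /\ (forall u, supp r u <-> P u).
Proof.
  induction K as [|k K IH]; intros P g HK Hg.
  - exists DZero; simpl; split; intros u.
    + symmetry; apply Hg; intro Hu; apply (HK u Hu).
    + split; [tauto| intro Hu; apply (HK u Hu)].
  - assert (A1 : forall u, P u /\ u <> k -> In u K).
    { intros u [Hu Hne]; destruct (HK u Hu); [congruence|auto]. }
    assert (A2 : forall u, ~ (P u /\ u <> k) -> (if tdec k u then RtoC 0 else g u) = RtoC 0).
    { intros u Hu; destruct (tdec k u); auto. }
    destruct (IH _ _ A1 A2) as [r' [Hc Hs]].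
    + destruct (classic (P k)) as [Pk|nPk].
      * exists (DAdd (DScal (g k) (DPure k)) r'); simpl; split; intros u.
        -- rewrite Hc; destruct (tdec k u); subst; ring.
        -- rewrite Hs; split; [intros [->|[? ?]]; auto| intros Pu].
           destruct (tdec k u); [left; auto| right; split; auto].
      * exists r'; split; intros u.
        -- rewrite Hc; destruct (tdec k u); subst; auto. symmetry; auto.
        -- rewrite Hs; split; [tauto|intros Pu; split; auto; intros ->; auto].
Qed.

Fixpoint D (l : list (C * term)) : tdist :=
  match l with
  | [] => DZero
  | p :: l' => DAdd (DScal (fst p) (DPure (snd p))) (D l')
  end.

Definition canon (l : list (C * term)) := NoDup (map snd l).

Lemma D_perm l l' : Permutation l l' -> deq (D l) (D l').
Proof.
  induction 1; simpl.
  - apply deq_refl.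
  - apply deq_add; [apply deq_refl|auto].
  - eapply deq_trans; [apply deq_addA|].
    eapply deq_trans; [|apply deq_sym, deq_addA].
    apply deq_add; [apply deq_addC|apply deq_refl].
  - eapply deq_trans; eauto.
Qed.

Lemma supp_D l u : supp (D l) u <-> In u (map snd l).
Proof.
  induction l as [|[c v] l IH]; simpl; [tauto|]. rewrite IH; tauto.
Qed.

Lemma coef_D_canon l c u : canon l -> In (c, u) l -> coef (D l) u = c.
Proof.
  induction l as [|[c' v] l IH]; simpl; [tauto|]. unfold canon; simpl.
  intros Hn Hin; inversion Hn; subst.
  destruct Hin as [Heq|Hin].
  - inversion Heq; subst. destruct (tdec u u); [|congruence].
    rewrite nsupp_coef; [ring|]. rewrite supp_D; auto.
  - destruct (tdec v u).
    + subst. exfalso. apply H1. apply in_map_iff. exists (c,u); auto.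
    + rewrite IH; auto; ring.
Qed.

Lemma canon_unique l l' : canon l -> canon l' -> sem (D l) (D l') -> deq (D l) (D l').
Proof.
  intros H H' [Hc Hs]. apply D_perm.
  apply NoDup_Permutation.
  - eapply NoDup_map_inv; exact H.
  - eapply NoDup_map_inv; exact H'.
  - assert (K : forall l l', canon l -> canon l' -> sem (D l) (D l') ->
       forall x, In x l -> In x l').
    { clear. intros l l' H H' [Hc Hs] [c u] Hin.
      assert (Hu : In u (map snd l')).
      { apply supp_D, Hs, supp_D. apply in_map_iff; exists (c,u); auto. }
      apply in_map_iff in Hu. destruct Hu as [[c' u'] [Heq Hin']]. simpl in Heq; subst u'.
      assert (c = c'). { rewrite <- (coef_D_canon l c u), <- (coef_D_canon l' c' u); auto. }
      subst; auto. }
    intros x; split; apply K; auto; split; auto; intros; try (symmetry; apply Hc); rewrite Hs; tauto.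
Qed.

Lemma scal_zero al : deq (DScal al DZero) DZero.
Proof.
  assert (Z : deq (DScal (RtoC 0) DZero) DZero).
  { eapply deq_trans; [apply deq_sym, deq_add0|].
    eapply deq_trans; [apply deq_addC|].
    eapply deq_trans; [apply deq_add; [apply deq_sym, deq_scal1|apply deq_refl]|].
    eapply deq_trans; [apply deq_sym, deq_scalDl|].
    replace (Cplus (RtoC 1) (RtoC 0)) with (RtoC 1) by ring. apply deq_scal1. }
  eapply deq_trans; [apply deq_scal, deq_sym, Z|].
  eapply deq_trans; [apply deq_scalA|].
  replace (Cmult al (RtoC 0)) with (RtoC 0) by ring. exact Z.
Qed.

Lemma D_scal al l : deq (DScal al (D l)) (D (map (fun p => (Cmult al (fst p), snd p)) l)).
Proof.
  induction l as [|[c u] l IH]; simpl.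
  - apply scal_zero.
  - eapply deq_trans; [apply deq_scalDr|]. apply deq_add; [apply deq_scalA|exact IH].
Qed.

Lemma insert_canon p l : canon l -> exists l', canon l' /\ deq (D (p :: l)) (D l').
Proof.
  destruct p as [c u]. intros H.
  destruct (classic (In u (map snd l))) as [Hin|Hnin].
  - apply in_map_iff in Hin. destruct Hin as [[c' u'] [Heq Hin]]; simpl in Heq; subst u'.
    apply in_split in Hin. destruct Hin as [l1 [l2 ->]].
    exists ((Cplus c c', u) :: l1 ++ l2). split.
    + unfold canon in *. simpl. eapply Permutation_NoDup; [|exact H].
      rewrite !map_app. simpl. apply Permutation_sym, Permutation_middle.
    + eapply deq_trans; [apply D_perm, perm_skip, Permutation_sym, Permutation_middle|].
      simpl. eapply deq_trans; [apply deq_addA|]. apply deq_add; [|apply deq_refl].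
      apply deq_sym, deq_scalDl.
  - exists ((c,u)::l); split; [constructor; auto|apply deq_refl].
Qed.

Lemma add_canon lb : forall la, canon la -> exists l', canon l' /\ deq (DAdd (D la) (D lb)) (D l').
Proof.
  induction lb as [|p lb IH]; intros la Ha; simpl.
  - exists la; split; auto; apply deq_add0.
  - destruct (insert_canon p la Ha) as [la' [Hc' Hd']].
    destruct (IH la' Hc') as [l' [Hl' Hd]]. exists l'; split; auto.
    eapply deq_trans; [apply deq_addA|]. eapply deq_trans; [|exact Hd].
    apply deq_add; [|apply deq_refl].
    eapply deq_trans; [apply deq_addC|exact Hd'].
Qed.

Lemma normalize d : exists l, canon l /\ deq d (D l).
Proof.
  induction d.
  - exists []; split; [constructor|apply deq_refl].
  - exists [(RtoC 1, t)]; split; [repeat constructor; simpl; tauto|]. simpl.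
    eapply deq_trans; [apply deq_sym, deq_scal1|]. apply deq_sym, deq_add0.
  - destruct IHd1 as [l1 [H1 E1]], IHd2 as [l2 [H2 E2]].
    destruct (add_canon l2 l1 H1) as [l [H E]]. exists l; split; auto.
    eapply deq_trans; [apply deq_add; eauto|exact E].
  - destruct IHd as [l [H E]]. eexists; split; [|eapply deq_trans; [apply deq_scal, E|apply D_scal]].
    unfold canon in *. rewrite map_map. simpl. rewrite <- (map_id (map snd l)) in H.
    rewrite map_map in H. exact H.
Qed.

Lemma sem_complete d e : sem d e -> deq d e.
Proof.
  intros H. destruct (normalize d) as [l [Hl El]], (normalize e) as [l' [Hl' El']].
  eapply deq_trans; [exact El|]. eapply deq_trans; [|apply deq_sym, El'].
  apply canon_unique; auto.
  apply deq_sound in El. apply deq_sound in El'. destruct H, El, El'.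
  split; intros u.
  - rewrite <- H1, <- H3; auto.
  - rewrite <- H2, <- H4; auto.
Qed.

Lemma sem_trans a b c : sem a b -> sem b c -> sem a c.
Proof. intros [H1 H2] [H3 H4]; split; intros u; [rewrite H1; auto| rewrite H2; auto]. Qed.
Lemma sem_sym a b : sem a b -> sem b a.
Proof. intros [H1 H2]; split; intros u; [rewrite H1; auto| rewrite H2; tauto]. Qed.

Lemma step_sem t t' al s s' r : sem t (DAdd (DScal al (DPure s)) r) ->
  sem t' (DAdd (DScal al s') r) -> atomic s s' -> step t t'.
Proof.
  intros H1 H2 A. exists al, s, s', r; split; [|split]; auto; apply sem_complete; auto.
Qed.

Theorem mainTheorem8 (t t1 t2 : tdist) :
  step t t1 -> step t t2 ->
  deq t1 t2 \/ step t1 t2 \/ step t2 t1 \/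
  (exists t'' : tdist, step t1 t'' /\ step t2 t'').
Proof.
  intros [a1 [s1 [s1' [r1 [H1a [H1b A1]]]]]] [a2 [s2 [s2' [r2 [H2a [H2b A2]]]]]].
  apply deq_sound in H1a, H1b, H2a, H2b.
  assert (E : sem (DAdd (DScal a1 (DPure s1)) r1) (DAdd (DScal a2 (DPure s2)) r2)).
  { eapply sem_trans; [apply sem_sym, H1a|exact H2a]. }
  destruct E as [Ec Es]. simpl in Es.
  assert (Ec2 : forall u, coef r2 u =
     Cminus (Cplus (Cmult a1 (coef (DPure s1) u)) (coef r1 u)) (Cmult a2 (coef (DPure s2) u))).
  { intros u. specialize (Ec u). simpl in Ec |- *.
    replace (coef r2 u) with (Cminus (Cplus (Cmult a2 (if tdec s2 u then RtoC 1 else RtoC 0)) (coef r2 u)) (Cmult a2 (if tdec s2 u then RtoC 1 else RtoC 0))) by ring.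
    rewrite <- Ec. ring. }
  clear Ec.
  destruct (classic (s1 = s2)) as [Heq|Hne].
  - subst s2. rewrite <- (atomic_det _ _ _ A1 A2) in *. clear A2 H2a H1a.
    destruct (classic (supp r2 s1)) as [S2|NS2]; [|destruct (classic (supp r1 s1)) as [S1|NS1]].
    + right; right; left.
      apply (step_sem _ _ (Cminus a1 a2) s1 s1' (DAdd (DScal a2 s1') r1)); auto.
      * eapply sem_trans; [exact H2b|]. split; intros u.
        -- simpl. rewrite Ec2. simpl. destruct (tdec s1 u); ring.
        -- simpl. specialize (Es u). destruct (classic (s1 = u)); [subst|]; tauto.
      * eapply sem_trans; [exact H1b|]. split; intros u; simpl; [ring|tauto].
    + right; left.
      apply (step_sem _ _ (Cminus a2 a1) s1 s1' (DAdd (DScal a1 s1') r2)); auto.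
      * eapply sem_trans; [exact H1b|]. split; intros u.
        -- simpl. rewrite Ec2. simpl. destruct (tdec s1 u); ring.
        -- simpl. specialize (Es u). destruct (classic (s1 = u)); [subst|]; tauto.
      * eapply sem_trans; [exact H2b|]. split; intros u; simpl; [rewrite Ec2; simpl; destruct (tdec s1 u); ring|tauto].
    + left. apply sem_complete.
      assert (Ha : a1 = a2).
      { pose proof (Ec2 s1) as X. simpl in X. destruct (tdec s1 s1); [|congruence].
        rewrite (nsupp_coef _ _ NS1), (nsupp_coef _ _ NS2) in X.
        replace a1 with (Cplus (Cminus (Cplus (Cmult a1 (RtoC 1)) (RtoC 0)) (Cmult a2 (RtoC 1))) a2) by ring.
        rewrite <- X. ring. }
      subst a2.
      eapply sem_trans; [exact H1b|]. apply sem_sym. eapply sem_trans; [exact H2b|].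
      split; intros u; simpl.
      * rewrite Ec2. simpl. destruct (tdec s1 u); [subst; rewrite (nsupp_coef _ _ NS1)|]; ring.
      * specialize (Es u). destruct (classic (s1 = u)); [subst|]; tauto.
  - assert (F1 : supp r1 s2) by (destruct (proj2 (Es s2)); auto; congruence).
    assert (F2 : supp r2 s1) by (destruct (proj1 (Es s1)); auto; congruence).
    destruct (supp_fin (DAdd (DScal a1 (DPure s1)) r1)) as [K HK].
    destruct (exists_rep K
      (fun u => (s1 = u \/ supp r1 u) /\ (u = s1 -> supp r1 s1) /\ (u = s2 -> supp r2 s2))
      (fun u => Cminus (coef r1 u) (Cmult a2 (coef (DPure s2) u)))) as [r [Hc Hs]].
    + intros u [Hu _]. apply HK. simpl. exact Hu.
    + intros u Hu. simpl.
      destruct (classic (u = s1)) as [->|n1]; [|destruct (classic (u = s2)) as [->|n2]].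
      * rewrite nsupp_coef by tauto. destruct (tdec s2 s1); [congruence|ring].
      * assert (NS : ~ supp r2 s2) by tauto.
        pose proof (Ec2 s2) as X. rewrite (nsupp_coef _ _ NS) in X. simpl in X.
        destruct (tdec s1 s2); [congruence|]. destruct (tdec s2 s2); [|congruence].
        replace (coef r1 s2) with (Cplus (Cminus (Cplus (Cmult a1 (RtoC 0)) (coef r1 s2)) (Cmult a2 (RtoC 1))) a2) by ring.
        rewrite <- X. ring.
      * rewrite nsupp_coef by (intro; apply Hu; split; [tauto|split; intro; congruence]).
        destruct (tdec s2 u); [congruence|ring].
    + right; right; right.
      exists (DAdd (DScal a1 s1') (DAdd (DScal a2 s2') r)). split.
      * apply (step_sem _ _ a2 s2 s2' (DAdd (DScal a1 s1') r)); auto.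
        -- eapply sem_trans; [exact H1b|]. split; intros u.
           ++ simpl. rewrite Hc. simpl. destruct (tdec s2 u); ring.
           ++ simpl. rewrite Hs. specialize (Es u).
              destruct (classic (u = s1)) as [->|?]; [|destruct (classic (u = s2)) as [->|?]]; intuition congruence.
        -- split; intros u; simpl; [ring|tauto].
      * apply (step_sem _ _ a1 s1 s1' (DAdd (DScal a2 s2') r)); auto.
        -- eapply sem_trans; [exact H2b|]. split; intros u.
           ++ simpl. rewrite Hc, Ec2. simpl. destruct (tdec s1 u), (tdec s2 u); ring.
           ++ simpl. rewrite Hs. specialize (Es u).
              destruct (classic (u = s1)) as [->|?]; [|destruct (classic (u = s2)) as [->|?]]; intuition congruence.
        -- split; intros u; simpl; [ring|tauto].
Qed.
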